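(* Let $W\in\mathbb{R}^{n\times n}$ be symmetric with nonnegative entries, $L=\operatorname{diag}(W\mathbf{1})-W$, and let $L=V^T\Lambda V$ be a full spectral decomposition with $V$ orthogonal, $\Lambda=\operatorname{diag}(\lambda_1,\dots,\lambda_n)$, $\lambda_1\le\dots\le\lambda_n$. Define $\tilde A=(\lambda_nI-\Lambda)^{1/2}V$. Let $K\ge1$. Then the ratio-cut problem $$\min_X\operatorname{tr}\{XLX^T\}\ \text{s.t. }X\in\mathcal{H}$$ and the K-means problem $$\min_{D,X}\|\tilde A-DX\|_F^2\ \text{s.t. }X\in\mathcal{H}$$ have the same solutions $X$.
   Context: $\mathbf{1}$ is the all-ones vector, $\operatorname{diag}(v)$ the diagonal matrix with diagonal $v$. $\mathcal{F}$ is the set of matrices $F\in\{0,1\}^{K\times n}$ in which every column has exactly one entry $1$ (rows are cluster indicator vectors, each cluster assumed nonempty), and $\mathcal{H}=\{(FF^T)^{-1/2}F:F\in\mathcal{F}\}$ is the set of normalized indicator matrices. *)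

(* Defs.v *)
From HB Require Import structures.
From mathcomp Require Import all_boot all_order all_algebra.
Set Implicit Arguments. Unset Strict Implicit. Unset Printing Implicit Defensive.
Import Order.TTheory GRing.Theory Num.Theory.
Local Open Scope ring_scope.

Section Defs.
Variable R : rcfType.

Definition orthogonal_mx (n : nat) (V : 'M[R]_n) : Prop :=
  V^T *m V = 1%:M /\ V *m V^T = 1%:M.

Definition laplacian (n : nat) (W : 'M[R]_n) : 'M[R]_n :=
  diag_mx (\row_i (\sum_j W i j)) - W.

Definition indicator_mx (K n : nat) (F : 'M[R]_(K, n)) : Prop :=
  (forall k j, F k j = 0 \/ F k j = 1) /\
  (forall j, exists! k, F k j = 1) /\
  (forall k, exists j, F k j = 1).

(* M^{-1/2} for a diagonal matrix M with positive diagonal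
   (F F^T is such a matrix for F in \mathcal{F}) *)
Definition diag_invsqrt (K : nat) (M : 'M[R]_K) : 'M[R]_K :=
  diag_mx (\row_k (Num.sqrt (M k k))^-1).

Definition normalized_indicator (K n : nat) (X : 'M[R]_(K, n)) : Prop :=
  exists F : 'M[R]_(K, n), indicator_mx F /\ X = diag_invsqrt (F *m F^T) *m F.

Definition frob2 (m n : nat) (M : 'M[R]_(m, n)) : R :=
  \sum_i \sum_j (M i j) ^+ 2.

End Defs.

(* Main.v *)
Require Import Defs.
From HB Require Import structures.
From mathcomp Require Import all_boot all_order all_algebra.
From mathcomp Require Import lra.
Import Order.TTheory GRing.Theory Num.Theory.
Local Open Scope ring_scope.

Set Implicit Arguments.
Section H.
Variable R : rcfType.

Lemma frob2E m n (M : 'M[R]_(m, n)) : frob2 M = \tr (M *m M^T).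
Proof.
rewrite /frob2 /mxtrace; apply: eq_bigr => i _; rewrite mxE.
by apply: eq_bigr => j _; rewrite !mxE expr2.
Qed.

Lemma frob2_ge0 m n (M : 'M[R]_(m, n)) : 0 <= frob2 M.
Proof. by apply: sumr_ge0 => i _; apply: sumr_ge0 => j _; apply: sqr_ge0. Qed.

Lemma trmx_diag n (d : 'rV[R]_n) : (diag_mx d)^T = diag_mx d.
Proof. exact: tr_diag_mx. Qed.

Lemma ni_orth K n (X : 'M[R]_(K, n)) : normalized_indicator X -> X *m X^T = 1%:M.
Proof.
case=> F [[F01 [Fu Fne]] ->].
rewrite trmx_mul /diag_invsqrt trmx_diag.
have FF : forall k l, (F *m F^T) k l = if k == l then (F *m F^T) k k else 0.
  move=> k l; case: eqP => [->//|/eqP kl].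
  rewrite mxE; apply: big1 => j _; rewrite mxE.
  case: (F01 k j) => [->|Hk]; first by rewrite mul0r.
  case: (F01 l j) => [->|Hl]; first by rewrite mulr0.
  case: (Fu j) => k0 [_ Hu].
  by move: kl; rewrite -(Hu _ Hk) -(Hu _ Hl) eqxx.
have Fpos : forall k, 0 < (F *m F^T) k k.
  move=> k; case: (Fne k) => j0 Hj0.
  rewrite mxE (bigD1 j0) //= !mxE Hj0 mulr1.
  apply: (lt_le_trans ltr01); rewrite lerDl.
  by apply: sumr_ge0 => j _; rewrite mxE -expr2 sqr_ge0.
rewrite (mulmxA _ F^T) -(mulmxA _ F F^T).
set M := F *m F^T in FF Fpos *.
clearbody M.
apply/matrixP => k l.
rewrite mul_mx_diag mul_diag_mx !mxE.
rewrite (FF k l); have [->|kl] := eqVneq k l; last by rewrite mulr0 mul0r.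
rewrite ?eqxx.
set a := M l l.
have a0 := Fpos l.
have s0 : 0 < Num.sqrt a by rewrite sqrtr_gt0.
rewrite -[X in _ * X * _](sqr_sqrtr (ltW a0)) expr2 mulKf ?divff // gt_eqF //.
Qed.

Lemma expand m N K (A : 'M[R]_(m, N)) (D : 'M[R]_(m, K)) (X : 'M[R]_(K, N)) :
  X *m X^T = 1%:M ->
  frob2 (A - D *m X) =
  \tr (A *m A^T) - \tr (X *m (A^T *m A) *m X^T) + frob2 (D - A *m X^T).
Proof.
move=> XX.
rewrite !frob2E !linearB /= !trmx_mul !trmxK.
rewrite !mulmxBl !linearB /=.
have e1 : \tr (D *m X *m (X^T *m D^T)) = \tr (D *m D^T).
  by rewrite -mulmxA (mulmxA X) XX mul1mx.
have e2 : \tr (A *m X^T *m (X *m A^T)) = \tr (X *m (A^T *m A) *m X^T).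
  by rewrite mxtrace_mulC !mulmxA.
rewrite e1 e2 !mulmxA.
set a := \tr (A *m A^T); set b := \tr (X *m (A^T *m A) *m X^T).
set c := \tr (D *m D^T).
lra.
Qed.

Lemma AtA n (V : 'M[R]_n.+1) (lam : 'rV[R]_n.+1) (L : 'M[R]_n.+1) :
  V^T *m V = 1%:M ->
  (forall i j : 'I_n.+1, (i <= j)%N -> lam 0 i <= lam 0 j) ->
  L = V^T *m diag_mx lam *m V ->
  let At := diag_mx (\row_i Num.sqrt (lam 0 ord_max - lam 0 i)) *m V in
  At^T *m At = (lam 0 ord_max)%:M - L.
Proof.
move=> VV mono -> At.
rewrite /At trmx_mul tr_diag_mx mulmxA.
set d := diag_mx _.
rewrite -(mulmxA V^T d d).
rewrite [d *m d](_ : _ = (lam 0 ord_max)%:M - diag_mx lam); last first.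
  rewrite /d mul_diag_mx.
  apply/matrixP => i j; rewrite !mxE.
  have [->|ij] := eqVneq i j; last by rewrite !mulr0n mulr0 subr0.
  rewrite !mulr1n -expr2 sqr_sqrtr // subr_ge0; apply: mono.
  by rewrite -ltnS.
rewrite mulmxBr mulmxBl mul_mx_scalar -scalemxAl VV scalemx1.
by [].
Qed.

Lemma trXcL K n (X : 'M[R]_(K, n)) (c : R) (L : 'M[R]_n) :
  X *m X^T = 1%:M ->
  \tr (X *m (c%:M - L) *m X^T) = c * K%:R - \tr (X *m L *m X^T).
Proof.
move=> XX.
rewrite mulmxBr mulmxBl linearB /= mul_mx_scalar -scalemxAl mxtraceZ XX mxtrace1.
by [].
Qed.
End H.
Unset Implicit Arguments.


(* The dimension is n.+1 (n >= 1), so that lambda_n = lam ord_max exists. *)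
Theorem proposition4 (R : rcfType) (n K : nat)
  (W : 'M[R]_n.+1) (V : 'M[R]_n.+1) (lam : 'rV[R]_n.+1) :
  W^T = W ->
  (forall i j, 0 <= W i j) ->
  orthogonal_mx V ->
  (forall i j : 'I_n.+1, (i <= j)%N -> lam 0 i <= lam 0 j) ->
  laplacian W = V^T *m diag_mx lam *m V ->
  (1 <= K)%N ->
  let L := laplacian W in
  let At := diag_mx (\row_i Num.sqrt (lam 0 ord_max - lam 0 i)) *m V in
  forall X : 'M[R]_(K, n.+1),
    (normalized_indicator X /\
     forall Y : 'M[R]_(K, n.+1), normalized_indicator Y ->
       \tr (X *m L *m X^T) <= \tr (Y *m L *m Y^T))
    <->
    (exists D : 'M[R]_(n.+1, K),
       normalized_indicator X /\
       forall (D' : 'M[R]_(n.+1, K)) (Y : 'M[R]_(K, n.+1)),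
         normalized_indicator Y ->
         frob2 (At - D *m X) <= frob2 (At - D' *m Y)).

Proof.
move=> Wsym Wnn [VV VV'] mono HL K1 L At X.
have HA : At^T *m At = (lam 0 ord_max)%:M - L by rewrite /L HL; exact: AtA.
set C := \tr (At *m At^T) - lam 0 ord_max * K%:R.
have key : forall (D : 'M[R]_(n.+1, K)) (Y : 'M[R]_(K, n.+1)), normalized_indicator Y ->
    frob2 (At - D *m Y) = C + \tr (Y *m L *m Y^T) + frob2 (D - At *m Y^T).
  move=> D Y HY; have YY := ni_orth HY.
  rewrite (expand _ _ YY) HA trXcL // /C; lra.
have f0 : frob2 (0 : 'M[R]_(n.+1, K)) = 0 by rewrite frob2E mul0mx mxtrace0.
split.
- case=> HX opt; exists (At *m X^T); split=> // D' Y HY.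
  rewrite !key // subrr f0.
  have := opt Y HY; have := frob2_ge0 _ (D' - At *m Y^T); lra.
- case=> D [HX opt]; split=> // Y HY.
  have := opt (At *m Y^T) Y HY; rewrite !key // subrr f0.
  have := frob2_ge0 _ (D - At *m X^T); lra.
Qed.
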